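(* Let $\Phi$ be an atomic CSP, $\pi$ an admissible projection scheme with parameter $\eta$ and $\kappa$ as in (A2), $\epsilon\in(0,1/2)$, and assume $\Delta,n\ge c_0$. Consider a run of the algorithm $\mathrm{Main}(\Phi,\pi,\epsilon)$ and fix $1\le t\le T$. The probability that the call to $\mathrm{Sample}$ at time $t$ fails due to (S2) is at most $(\epsilon/\kappa n)^{10}$. Moreover, the probability that $\mathrm{InvSample}$ fails due to (I2) is at most $(\epsilon/\kappa n)^9$.
   Context: CSP notation: $\Phi=(V,(\Omega_v),\mathcal{C})$, $n=|V|$; atomic: each $C$ has a unique violating assignment $\boldsymbol{C}\in\prod_{v\in\mathrm{vbl}(C)}\Omega_v$; degree $\Delta=\max_C|\{C':\mathrm{vbl}(C)\cap\mathrm{vbl}(C')\ne\emptyset\}|$; $\mu_\Phi$ uniform on satisfying assignments. Projection scheme $\pi_v:\Omega_v\to Q_v$; $\mathbb{P}_\pi,\mu_\pi$ pushforwards of the uniform distribution on $\prod_v\Omega_v$ and of $\mu_\Phi$; $\boldsymbol{C}_\pi(v)=\pi_v(\boldsymbol{C}(v))$; $b(C)=\prod_{u\in\mathrm{vbl}(C)}|\pi_u^{-1}(\boldsymbol{C}_\pi(u))|^{-1}$, $b=\max_Cb(C)$; $q_{\mathrm{TV}}=\max_{v,Y}d_{\mathrm{TV}}(\mathbb{P}_\pi[\mathrm{value}(v)=\cdot],\mu_\pi[\mathrm{value}(v)=\cdot\mid Y^{-v}])$; $\overline{\mathrm{vbl}}(C)=\{v\in\mathrm{vbl}(C):|Q_v|>1\}$;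 $\zeta(C)=\max\{1,\max_{v\in\overline{\mathrm{vbl}}(C)}\min(\frac{(1-3b)^\Delta q_{\mathrm{TV}}}{\mathbb{P}_\pi[\mathrm{value}(v)=\boldsymbol{C}_\pi(v)]},2\Delta)\}$. Admissible (parameter $\eta\in(0,1/2)$): (A1) $b\le\eta/(300\Delta)$; (A2) exists $\kappa\ge4\log(3000\Delta)$, $\kappa\le K(\log\Delta+\log\max|Q_v|+\log\max|\mathrm{vbl}(C)|)$, with $|\overline{\mathrm{vbl}}(C)|^2\kappa^2\zeta(C)\prod_{v\in\overline{\mathrm{vbl}}(C)}((1-3b)^{-\Delta}\mathbb{P}_\pi[\mathrm{value}(v)=\boldsymbol{C}_\pi(v)]+e^{-\kappa/3})\le(60000\Delta)^{-2}$ for all $C$; (A3) factor-$2$ comparability of $\mathbb{P}_\pi[\mathrm{value}(v)=\boldsymbol{C}_\pi(v)]$ over constraints $C\ni v$; (A4) $\pi_v$ and fibre sampling in time $K\log|\Omega_v|$. Graph notation: for $Y\in\prod_{v\in V'}Q_v$, $\mathcal{C}(Y)$ = constraints with $Y(v)=\boldsymbol{C}_\pi(v)$ on $\mathrm{vbl}(C)\cap V'$; $H(Y)$ graph on $V$ with $u\ne v$ adjacent iff both lie in $\mathrm{vbl}(C)$ for some $C\in\mathcal{C}(Y)$; $\mathcal{C}(H')=\{C\in\mathcal{C}(Y):\mathrm{vbl}(C)\subseteq H'\}$ for a component $H'$. Constants $c_0,C_0\ge1$ absolute; $L=20\Delta\log(n\kappa/\epsilon)$, $S=10(\kappa n/\epsilon)^\eta\log(n\kappa/\epsilon)$,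 $T=C_0\kappa n\log(n\Delta/\epsilon)$. $\mathrm{Main}$: (M1) $Y_0(v)$ independent uniform in $Q_v$; (M2) for $t=1..T$, pick $v_t$ uniform in $V$, set $Y_t(v_t)=\mathrm{Sample}(Y_{t-1},v_t)$, other coordinates unchanged; (M3) return $\mathrm{InvSample}(Y_T)$. $\mathrm{Sample}(Y,v)$: $H_v$ = component of $v$ in $H(Y^{-v})$. (S1) if $|\mathcal{C}(H_v)|>L$, output a uniform element of $Q_v$. (S2) else, up to $S$ independent attempts draw $X(u)$ uniform in $\pi_u^{-1}(Y(u))$ ($u\in H_v\setminus\{v\}$), $X(v)$ uniform in $\Omega_v$, and output $\pi_v(X(v))$ at the first attempt satisfying all of $\mathcal{C}(H_v)$; if all $S$ attempts fail, output a uniform element of $Q_v$ — this event is ''Sample fails due to (S2)''. $\mathrm{InvSample}(Y)$: (I1) if some component $H'$ of $H(Y)$ has $|\mathcal{C}(H')|>L$, output ERROR. (I2) else for each component $H_j$, up to $S$ attempts draw $X(u)$ uniform in $\pi_u^{-1}(Y(u))$ for $u\in H_j$, keeping the first attempt satisfying all of $\mathcal{C}(H_j)$; if for some $H_j$ all $S$ attempts fail, output ERROR — this is ''InvSample fails due to (I2)''. Otherwise output the assembled $X$. *)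

(* Defs.v *)
From HB Require Import structures.
From mathcomp Require Import all_boot all_order all_algebra.
From mathcomp Require Import reals sequences exp.
Set Implicit Arguments. Unset Strict Implicit. Unset Printing Implicit Defensive.
Import Order.TTheory GRing.Theory Num.Theory.
Local Open Scope ring_scope.

Section Dist.
Variable R : realType.
Definition dist (T : finType) := {ffun T -> R}.
Definition dret (T : finType) (x : T) : dist T := [ffun y => (y == x)%:R].
Definition dbind (A B : finType) (d : dist A) (f : A -> dist B) : dist B :=
  [ffun b => \sum_(a : A) d a * f a b].
Definition unif (T : finType) (A : {set T}) : dist T :=
  [ffun x => if x \in A then #|A|%:R^-1 else 0].
Definition dprob (T : finType) (d : dist T) (E : pred T) : R :=
  \sum_(x : T | E x) d x.
End Dist.

(*  - variables V = 'I_n ; all domains are subsets Dom v of a common finite *)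
(*    type Om (Omega_v := Dom v) ;                                           *)
(*  - projection pi v : Om -> Q, with Q_v := pi v @: Dom v ;                 *)
(*  - constraints indexed by 'I_m ; constraint C has variable set vbl C and  *)
(*    unique violating assignment bad C (restricted to vbl C).               *)
Section CSP.
Variables (R : realType) (n m : nat) (Om Q : finType).
Variables (Dom : 'I_n -> {set Om}) (pi : 'I_n -> Om -> Q).
Variables (vbl : 'I_m -> {set 'I_n}) (bad : 'I_m -> 'I_n -> Om).

Definition Qv (v : 'I_n) : {set Q} := pi v @: Dom v.
Definition fibre (v : 'I_n) (q : Q) : {set Om} := [set x in Dom v | pi v x == q].
Definition Ppi (v : 'I_n) (q : Q) : R := #|fibre v q|%:R / #|Dom v|%:R.
Definition Cpi (C : 'I_m) (u : 'I_n) : Q := pi u (bad C u).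

Definition bC (C : 'I_m) : R := \prod_(u in vbl C) (#|fibre u (Cpi C u)|%:R)^-1.
Definition bmax : R := \big[Num.max/0]_(C : 'I_m) bC C.

Definition Delta : nat :=
  \max_(C : 'I_m) #|[set C' : 'I_m | ~~ [disjoint vbl C & vbl C']]|.

Definition assignment := {ffun 'I_n -> Om}.
Definition violated (C : 'I_m) (X : assignment) : bool :=
  [forall u in vbl C, X u == bad C u].
Definition SatSet : {set assignment} :=
  [set X : assignment | [forall u, X u \in Dom u] && [forall C, ~~ violated C X]].

Definition qassign := {ffun 'I_n -> Q}.
Definition cond (v : 'I_n) (Y : qassign) : {set assignment} :=
  [set X in SatSet | [forall u, (u != v) ==> (pi u (X u) == Y u)]].
Definition mu_cond (v : 'I_n) (Y : qassign) (q : Q) : R :=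
  #|[set X in cond v Y | pi v (X v) == q]|%:R / #|cond v Y|%:R.
Definition dTV (v : 'I_n) (Y : qassign) : R :=
  2^-1 * \sum_(q : Q) `|Ppi v q - mu_cond v Y q|.
(* max over v and over Y^{-v} in the support of mu_pi *)
Definition qTV : R :=
  \big[Num.max/0]_(v : 'I_n) \big[Num.max/0]_(Y : qassign | (0 < #|cond v Y|)%N)
     dTV v Y.

Definition vbar (C : 'I_m) : {set 'I_n} := [set u in vbl C | (1 < #|Qv u|)%N].

Definition zeta (C : 'I_m) : R :=
  Num.max 1 (\big[Num.max/0]_(u in vbar C)
     Num.min ((1 - 3 * bmax) ^+ Delta * qTV / Ppi u (Cpi C u)) (2 * Delta%:R)).

Definition maxQ : nat := \max_(v : 'I_n) #|Qv v|.
Definition maxvbl : nat := \max_(C : 'I_m) #|vbl C|.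

Definition A1 (eta : R) : Prop := bmax <= eta / (300 * Delta%:R).
Definition A2 (K kappa : R) : Prop :=
  [/\ 4 * ln (3 * 10 ^+ 3 * Delta%:R) <= kappa,
      kappa <= K * (ln Delta%:R + ln maxQ%:R + ln maxvbl%:R) &
      forall C : 'I_m,
        (#|vbar C|%:R) ^+ 2 * kappa ^+ 2 * zeta C *
          \prod_(u in vbar C)
             ((1 - 3 * bmax) ^- Delta * Ppi u (Cpi C u) + expR (- kappa / 3))
        <= (6 * 10 ^+ 4 * Delta%:R) ^- 2].
Definition A3 : Prop :=
  forall (v : 'I_n) (C C' : 'I_m), v \in vbl C -> v \in vbl C' ->
    Ppi v (Cpi C v) <= 2 * Ppi v (Cpi C' v).

(* C(Y) for Y defined on V' (values of Y outside V' are ignored) *)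
Definition CofY (V' : {set 'I_n}) (Y : qassign) : {set 'I_m} :=
  [set C | [forall u in vbl C :&: V', Y u == Cpi C u]].
Definition adjH (V' : {set 'I_n}) (Y : qassign) : rel 'I_n :=
  fun u w => (u != w) && [exists C in CofY V' Y, (u \in vbl C) && (w \in vbl C)].
Definition compH (V' : {set 'I_n}) (Y : qassign) (v : 'I_n) : {set 'I_n} :=
  [set u | connect (adjH V' Y) v u].
Definition CofH (V' : {set 'I_n}) (Y : qassign) (H : {set 'I_n}) : {set 'I_m} :=
  [set C in CofY V' Y | vbl C \subset H].

Definition satC (Cs : {set 'I_m}) (X : assignment) : bool :=
  [forall C in Cs, ~~ violated C X].

(* uniform product distribution: X u uniform in F u independently *)
Definition prodset (F : 'I_n -> {set Om}) : {set assignment} :=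
  [set X : assignment | [forall u, X u \in F u]].

Fixpoint attempts (k : nat) (draw : dist R assignment) (ok : pred assignment)
  : dist R (option assignment) :=
  match k with
  | 0 => dret R (None : option assignment)
  | k'.+1 => dbind draw (fun X => if ok X then dret R (Some X)
                                  else attempts k' draw ok)
  end.

Variables (kappa eps eta C0 : R).

Definition Lpar : R := 20 * Delta%:R * ln (n%:R * kappa / eps).
Definition Spar : R := 10 * (kappa * n%:R / eps) `^ eta * ln (n%:R * kappa / eps).
Definition Tpar : R := C0 * kappa * n%:R * ln (n%:R * Delta%:R / eps).
(* "up to S attempts" and "t = 1..T" with real S, T *)
Definition Snat : nat := Num.truncn Spar.
Definition Tnat : nat := Num.truncn Tpar.

(* Sample(Y, v): output value in Q together with the flag
   "Sample fails due to (S2)". *)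
Definition Sample (Y : qassign) (v : 'I_n) : dist R (Q * bool)%type :=
  let V' := [set: 'I_n] :\ v in
  let Hv := compH V' Y v in
  let CH := CofH V' Y Hv in
  if Lpar < #|CH|%:R then
    dbind (unif R (Qv v)) (fun q => dret R (q, false))
  else
    dbind (attempts Snat
             (unif R (prodset (fun u => if u == v then Dom u
                                      else if u \in Hv then fibre u (Y u)
                                      else Dom u)))
             (satC CH))
      (fun o => match o with
                | Some X => dret R (pi v (X v), false)
                | None => dbind (unif R (Qv v)) (fun q => dret R (q, true))
                end).

Definition step (Y : qassign) : dist R (qassign * bool)%type :=
  dbind (unif R [set: 'I_n]) (fun v =>
    dbind (Sample Y v) (fun p =>
      dret R ([ffun u => if u == v then p.1 else Y u], p.2))).

Fixpoint Ydist (t : nat) : dist R qassign :=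
  match t with
  | 0 => unif R [set Y : qassign | [forall u, Y u \in Qv u]]
  | t'.+1 => dbind (Ydist t') (fun Y => dbind (step Y) (fun p => dret R p.1))
  end.

Definition failS (t : nat) : R :=
  dprob (dbind (Ydist t.-1) step) (fun p => p.2).

(* InvSample: outcome None = ERROR by (I1), Some None = ERROR by (I2),
   Some (Some X) = output X (all coordinates are defined, i.e. Some _). *)
Definition comps (Y : qassign) : {set {set 'I_n}} :=
  [set compH [set: 'I_n] Y u | u in [set: 'I_n]].

Fixpoint inv_loop (Y : qassign) (l : seq {set 'I_n}) (acc : {ffun 'I_n -> option Om})
  : dist R (option {ffun 'I_n -> option Om}) :=
  match l with
  | [::] => dret R (Some acc)
  | H :: l' =>
      dbind (attempts Snat
               (unif R (prodset (fun u => if u \in H then fibre u (Y u) else Dom u)))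
               (satC (CofH [set: 'I_n] Y H)))
        (fun o => match o with
                  | None => dret R None
                  | Some X => inv_loop Y l' [ffun u => if u \in H then Some (X u)
                                                      else acc u]
                  end)
  end.

Definition InvSample (Y : qassign)
  : dist R (option (option {ffun 'I_n -> option Om})) :=
  if [exists H in comps Y, Lpar < #|CofH [set: 'I_n] Y H|%:R] then dret R None
  else dbind (inv_loop Y (enum (comps Y)) [ffun => None]) (fun o => dret R (Some o)).

Definition failI : R :=
  dprob (dbind (Ydist Tnat) InvSample) (fun o => o == Some None).

End CSP.

(* Main.v *)
Require Import Defs.
From HB Require Import structures.
From mathcomp Require Import all_boot all_order all_algebra.
From mathcomp Require Import reals sequences exp.
Import Order.TTheory GRing.Theory Num.Theory.
Local Open Scope ring_scope.
Set Warnings "-notation-overridden,-ambiguous-paths".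
From mathcomp Require Import lra ring.
Section Inj.
Variables (n m : nat) (Om : finType) (F : 'I_n -> {set Om}).
Variables (vbl : 'I_m -> {set 'I_n}) (bad : 'I_m -> 'I_n -> Om).

Definition Omg := prodset F.
Definition cnt (S : {set 'I_m}) := #|[set X in Omg | satC vbl bad S X]|.
Definition viol (C : 'I_m) (S : {set 'I_m}) :=
  #|[set X in Omg | violated vbl bad C X && satC vbl bad S X]|.

Lemma card_fam (W : {set 'I_n}) (X0 : assignment n Om) :
  #|[set Z : assignment n Om | [forall u, if u \in W then Z u \in F u else Z u == X0 u]]|
  = (\prod_(u in W) #|F u|)%N.
Proof.
have -> : [set Z : assignment n Om | [forall u, if u \in W then Z u \in F u else Z u == X0 u]]
   = [set Z in family (fun u => if u \in W then mem (F u) else mem (pred1 (X0 u)))].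
  apply/setP => Z; rewrite !inE; apply/forallP/familyP => H u; have := H u;
  by case: (u \in W) => //=.
rewrite cardsE card_family foldrE big_map big_enum /=.
rewrite (bigID (mem W)) /= [X in (_ * X)%N]big1 ?muln1.
  by apply: eq_bigr => u ->.
by move=> u /negbTE ->; rewrite card1.
Qed.
Lemma inj_le C (S : {set 'I_m}) : (forall D, D \in S -> [disjoint vbl D & vbl C]) ->
  (viol C S * \prod_(u in vbl C) #|F u| <= cnt S)%N.
Proof.
move=> Hdis.
set V := [set X in Omg | violated vbl bad C X && satC vbl bad S X].
have [E0|/set0Pn [X0 HX0]] := eqVneq V set0.
  by rewrite /viol -/V E0 cards0.
rewrite /viol -/V -(card_fam (vbl C) X0) -cardsX.
set Zs := [set Z : assignment n Om | _].
pose Phi (p : assignment n Om * assignment n Om) : assignment n Om :=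
  [ffun u => if u \in vbl C then p.2 u else p.1 u].
rewrite -(@card_in_imset _ _ Phi); last first.
  move=> [X Z] [X' Z']; rewrite /= !in_setX => /andP[HX HZ] /andP[HX' HZ'] E.
  move: HX HX'; rewrite !inE /violated => /andP[_ /andP[/forallP vX _]] /andP[_ /andP[/forallP vX' _]].
  move: HZ HZ'; rewrite !inE => /forallP HZ /forallP HZ'.
  have EE u : Phi (X, Z) u = Phi (X', Z') u by rewrite E.
  congr pair; apply/ffunP => u; have := EE u; rewrite !ffunE /=;
    case Hu: (u \in vbl C) => //.
  - by move=> _; have := vX u; have := vX' u; rewrite Hu /= => /eqP -> /eqP ->.
  - by move=> _; have := HZ u; have := HZ' u; rewrite Hu => /eqP -> /eqP ->.
apply: subset_leq_card; apply/subsetP => Y /imsetP [[X Z]].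
rewrite !inE /= => /andP[HX HZ] ->.
move: HX HZ => /andP[/forallP HXO /andP[_ /forallP HS]] /forallP HZ.
apply/andP; split.
  apply/forallP => u; rewrite ffunE; have := HZ u; have := HXO u.
  by case: (u \in vbl C).
apply/forallP => D; apply/implyP => HD; have := HS D; rewrite HD /= => HnD.
apply: contra HnD => /forallP Hv; apply/forallP => u; apply/implyP => Hu.
have := Hv u; rewrite Hu /= ffunE.
by rewrite (disjointFr (Hdis D HD) Hu).
Qed.

Lemma satC_U1 (Dc : 'I_m) (T : {set 'I_m}) X :
  satC vbl bad (Dc |: T) X = ~~ violated vbl bad Dc X && satC vbl bad T X.
Proof.
apply/forall_inP/andP => [H|[H1 /forall_inP H2] C].
  split; first by apply: H; rewrite setU11.
  by apply/forall_inP => C HC; apply: H; rewrite setU1r.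
by rewrite in_setU1 => /orP[/eqP->|]; auto.
Qed.

Lemma cnt_U1 (Dc : 'I_m) (T : {set 'I_m}) :
  cnt T = (cnt (Dc |: T) + viol Dc T)%N.
Proof.
rewrite /cnt /viol -(cardsID [set X | violated vbl bad Dc X]
   [set X in Omg | satC vbl bad T X]) addnC.
congr (_ + _)%N; apply: eq_card => X; rewrite !inE ?satC_U1.
  all: by case: (violated _ _ _ _); case: [forall u, _]; case: (satC _ _ _ _).
Qed.

Lemma cnt0 : cnt set0 = #|Omg|.
Proof.
by apply: eq_card => X; rewrite inE; case: (X \in Omg) => //=; apply/forall_inP => C; rewrite inE.
Qed.

Lemma viol_sub C (S T : {set 'I_m}) : T \subset S -> (viol C S <= viol C T)%N.
Proof.
move=> HTS; apply: subset_leq_card; apply/subsetP => X; rewrite !inE.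
case/andP => -> /andP[-> /forall_inP HS] /=; apply/forall_inP => D HD.
by apply: HS; apply: (subsetP HTS).
Qed.

Section Real.
Variable R : realType.
Definition wC (C : 'I_m) : R := \prod_(u in vbl C) (#|F u|%:R)^-1.

Lemma viol_real C (S : {set 'I_m}) : (forall D, D \in S -> [disjoint vbl D & vbl C]) ->
  (viol C S)%:R <= wC C * (cnt S)%:R.
Proof.
move=> Hdis; have Hle := inj_le C S Hdis.
have wC0 : 0 <= wC C by apply: prodr_ge0 => u _; rewrite invr_ge0.
have [->|Hv] := eqVneq (viol C S) 0%N.
  by rewrite mulr_ge0.
have Hp : (0 < \prod_(u in vbl C) #|F u|)%N.
  have : (0 < viol C S)%N by rewrite lt0n.
  rewrite /viol card_gt0 => /set0Pn [X]; rewrite !inE => /andP[/forallP HX _].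
  apply: prodn_gt0 => u; apply/card_gt0P; exists (X u); exact: HX.
have -> : wC C = ((\prod_(u in vbl C) #|F u|)%:R)^-1.
  by rewrite /wC natr_prod prodfV.
rewrite mulrC ler_pdivlMr ?ltr0n //.
by rewrite -natrM ler_nat.
Qed.

Variables (x b : R) (Dg : nat) (S0 : {set 'I_m}).
Hypotheses (hx0 : 0 <= x) (hx1 : x <= 1) (hb : b <= x * (1 - x) ^+ Dg)
  (hw : forall C, C \in S0 -> wC C <= b)
  (hdeg : forall C, (#|[set C' | ~~ [disjoint vbl C & vbl C']]| <= Dg)%N).

Lemma lll_step (S : {set 'I_m}) C :
  S \subset S0 -> C \in S0 ->
  (forall T : {set 'I_m}, (#|T| < #|S|)%N -> T \subset S0 -> forall D, D \in S0 ->
      (viol D T)%:R <= x * (cnt T)%:R) ->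
  (viol C S)%:R <= x * (cnt S)%:R.
Proof.
move=> HS0 HC IHT.
set N := [set C' | ~~ [disjoint vbl C & vbl C']].
set S2 := S :\: N.
have H1x : 0 <= 1 - x by rewrite subr_ge0.
have key : forall k (T : {set 'I_m}), #|T| = k -> T \subset S :&: N ->
    (1 - x) ^+ #|T| * (cnt S2)%:R <= (cnt (S2 :|: T))%:R.
  elim=> [|k IHk] T HT HTS.
    by move/eqP: HT; rewrite cards_eq0 => /eqP ->; rewrite cards0 expr0 mul1r setU0.
  have : (0 < #|T|)%N by rewrite HT.
  rewrite card_gt0 => /set0Pn [D HD].
  have HT' : #|T :\ D| = k by move: HT; rewrite (cardsD1 D T) HD add1n => -[].
  have HT'S : T :\ D \subset S :&: N by apply: subset_trans HTS; apply: subsetDl.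
  have IH := IHk _ HT' HT'S.
  have DSN : D \in S :&: N := subsetP HTS D HD.
  move: (DSN); rewrite inE => /andP[DS DN].
  set U := S2 :|: (T :\ D).
  have EU : S2 :|: T = D |: U.
    apply/setP => y; rewrite !inE; case: (y =P D) => [->|] /=.
      by rewrite HD orbT.
    by [].
  have HUS : U \subset S :\ D.
    apply/subsetP => y; rewrite !inE => /orP[/andP[yN yS]|/andP[yD yT]].
      rewrite yS andbT; apply/eqP => E; move: yN DN; rewrite E inE negbK => ->; done.
    by rewrite yD; move: (subsetP HTS y yT); rewrite inE => /andP[].
  have cU : (#|U| < #|S|)%N.
    apply: leq_ltn_trans (subset_leq_card HUS) _.
    by rewrite (cardsD1 D S) DS add1n ltnSn.
  have U0 : U \subset S0 by apply: subset_trans HUS (subset_trans (subsetDl _ _) HS0).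
  have := IHT U cU U0 D (subsetP HS0 D DS).
  rewrite EU (cnt_U1 D U) natrD => Hv.
  rewrite (cardsD1 D T) HD add1n exprS -mulrA.
  apply: le_trans (ler_wpM2l H1x IH) _.
  rewrite (cnt_U1 D U) natrD mulrBl mul1r lerBlDr lerD2l.
  exact: Hv.
have ES : S2 :|: (S :&: N) = S by rewrite setUC setID.
have K := key _ (S :&: N) erefl (subxx _); rewrite ES in K.
have c1 : (#|S :&: N| <= Dg)%N.
  exact: leq_trans (subset_leq_card (subsetIr S N)) (hdeg C).
have c2 : (1 - x) ^+ Dg <= (1 - x) ^+ #|S :&: N|.
  by apply: ler_wiXn2l => //; rewrite lerBlDr lerDl.
have v1 : (viol C S <= viol C S2)%N by apply: viol_sub; apply: subsetDl.
have v2 : (viol C S2)%:R <= wC C * (cnt S2)%:R.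
  apply: viol_real => D; rewrite !inE negbK => /andP[HD _].
  by rewrite disjoint_sym.
have cS2 : 0 <= (cnt S2)%:R :> R by [].
have v3 : (viol C S)%:R <= wC C * (cnt S2)%:R :> R.
  by apply: le_trans v2; rewrite ler_nat.
apply: (le_trans v3).
have v4 : x * ((1 - x) ^+ #|S :&: N| * (cnt S2)%:R) <= x * (cnt S)%:R.
  by apply: ler_wpM2l.
apply: le_trans _ v4.
rewrite mulrA; apply: ler_wpM2r => //.
apply: (le_trans (hw C HC)); apply: (le_trans hb).
by apply: ler_wpM2l.
Qed.

Lemma lll k (S : {set 'I_m}) : (#|S| <= k)%N -> S \subset S0 ->
  forall C, C \in S0 -> (viol C S)%:R <= x * (cnt S)%:R.
Proof.
elim: k S => [|k IHk] S HS HS0 C HC; apply: lll_step => // T HT HT0 D HD.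
  by move: (leq_trans HT HS).
by apply: IHk => //; rewrite -ltnS; apply: leq_trans HT HS.
Qed.

Lemma lll_cnt k (S : {set 'I_m}) : #|S| = k -> S \subset S0 ->
  (1 - x) ^+ #|S| * (#|Omg|)%:R <= (cnt S)%:R.
Proof.
elim: k S => [|k IHk] S HS HS0.
  by move/eqP: HS; rewrite cards_eq0 => /eqP ->; rewrite cards0 expr0 mul1r cnt0.
have : (0 < #|S|)%N by rewrite HS.
rewrite card_gt0 => /set0Pn [D HD].
have HS' : #|S :\ D| = k by move: HS; rewrite (cardsD1 D S) HD add1n => -[].
have HS0' : S :\ D \subset S0 by apply: subset_trans HS0; apply: subsetDl.
have IH := IHk _ HS' HS0'.
have Hv := lll _ _ (leqnn _) HS0' D (subsetP HS0 D HD).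
have ES : S = D |: (S :\ D) by rewrite setD1K.
rewrite (cardsD1 D S) HD add1n exprS -mulrA.
have H1x : 0 <= 1 - x by rewrite subr_ge0.
apply: le_trans (ler_wpM2l H1x IH) _.
have E2 := cnt_U1 D (S :\ D); rewrite -ES in E2.
move: Hv; rewrite E2 natrD mulrBl mul1r lerBlDr lerD2l.
by [].
Qed.

End Real.
End Inj.
Set Implicit Arguments. Unset Strict Implicit.
Section DistL.
Variable R : realType.
Definition mass (T : finType) (d : dist R T) := \sum_x d x.
Definition subprob (T : finType) (d : dist R T) := (forall x, 0 <= d x) /\ mass d <= 1.

Lemma dret_sp (T : finType) (x : T) : subprob (dret R x).
Proof.
split=> [y|]; first by rewrite ffunE ler0n.
rewrite /mass (bigD1 x) //= big1 ?addr0 ?ffunE ?eqxx //.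
by move=> y /negbTE Hy; rewrite ffunE Hy.
Qed.

Lemma unif_sp (T : finType) (A : {set T}) : subprob (unif R A).
Proof.
split=> [y|]; first by rewrite ffunE; case: (y \in A) => //; rewrite invr_ge0 ler0n.
rewrite /mass (bigID (mem A)) /= [X in _ + X]big1 ?addr0; last first.
  by move=> y /negbTE Hy; rewrite ffunE Hy.
rewrite (eq_bigr (fun _ => #|A|%:R^-1)); last by move=> y Hy; rewrite ffunE Hy.
rewrite sumr_const.
have [->|HA] := eqVneq #|A| 0%N; first by rewrite mulr0n ler01.
by rewrite -(mulr_natr (#|A|%:R^-1)) mulVf // pnatr_eq0.
Qed.

Lemma dbind_sp (A B : finType) (d : dist R A) (f : A -> dist R B) :
  subprob d -> (forall a, subprob (f a)) -> subprob (dbind d f).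
Proof.
move=> [d0 d1] Hf; split=> [y|].
  by rewrite ffunE; apply: sumr_ge0 => a _; apply: mulr_ge0 => //; case: (Hf a).
rewrite /mass; under eq_bigr => y _ do rewrite ffunE.
rewrite exchange_big /=.
apply: le_trans d1; apply: ler_sum => a _.
rewrite -mulr_sumr; apply: ler_piMr => //; by case: (Hf a).
Qed.

Lemma dprob_bind (A B : finType) (d : dist R A) (f : A -> dist R B) E :
  dprob (dbind d f) E = \sum_a d a * dprob (f a) E.
Proof.
rewrite /dprob; under eq_bigr => y _ do rewrite ffunE.
rewrite exchange_big /=.
by apply: eq_bigr => a _; rewrite mulr_sumr.
Qed.

Lemma dprob_ge0 (T : finType) (d : dist R T) E : subprob d -> 0 <= dprob d E.
Proof. by case=> d0 _; apply: sumr_ge0. Qed.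

Lemma dprob_le1 (T : finType) (d : dist R T) E : subprob d -> dprob d E <= 1.
Proof.
case=> d0 d1; apply: le_trans d1; rewrite /dprob /mass [X in _ <= X](bigID E) /=.
by rewrite lerDl sumr_ge0.
Qed.

Lemma dprob_bind_le (A B : finType) (d : dist R A) (f : A -> dist R B) E (h : A -> R) :
  (forall a, 0 <= d a) -> (forall a, dprob (f a) E <= h a) ->
  dprob (dbind d f) E <= \sum_a d a * h a.
Proof.
move=> d0 Hh; rewrite dprob_bind; apply: ler_sum => a _.
by apply: ler_wpM2l.
Qed.

Lemma dprob_bind_bound (A B : finType) (d : dist R A) (f : A -> dist R B) E (beta : R) :
  subprob d -> 0 <= beta -> (forall a, dprob (f a) E <= beta) ->
  dprob (dbind d f) E <= beta.
Proof.
move=> [d0 d1] b0 Hh; apply: le_trans (dprob_bind_le d0 Hh) _.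
rewrite -mulr_suml; apply: ler_piMl => //.
Qed.

Lemma attempts_sp n (Om : finType) k (draw : dist R (assignment n Om)) ok :
  subprob draw -> subprob (attempts k draw ok).
Proof.
move=> Hd; elim: k => [|k IHk] /=; first exact: dret_sp.
apply: dbind_sp => // X; case: (ok X) => //; exact: dret_sp.
Qed.

Lemma attempts_None n (Om : finType) k (draw : dist R (assignment n Om)) ok :
  attempts k draw ok None = (\sum_X draw X * (~~ ok X)%:R) ^+ k.
Proof.
elim: k => [|k IHk] /=; first by rewrite ffunE expr0.
rewrite ffunE exprS mulr_suml; apply: eq_bigr => X _.
by case: (ok X) => /=; rewrite ?ffunE ?mulr0 ?mul0r ?mulr1 // IHk.
Qed.
End DistL.
Unset Implicit Arguments.
Section Num.
Variable R : realType.

Lemma bern (y : R) (s : nat) : 0 <= y <= 1 -> 1 - s%:R * y <= (1 - y) ^+ s.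
Proof.
move=> /andP[y0 y1]; elim: s => [|s IH]; first by rewrite expr0 mul0r subr0.
rewrite exprS -natr1.
have h0 : 0 <= 1 - y by lra.
have h1 : (1 - y) * (1 - s%:R * y) <= (1 - y) * (1 - y) ^+ s by apply: ler_wpM2l.
apply: le_trans h1.
have : 0 <= s%:R * y * y by apply: mulr_ge0 => //; apply: mulr_ge0.
nra.
Qed.

Lemma expR_half_le2 : expR (2^-1) <= 2 :> R.
Proof.
have h := expR_ge1Dx (- 2^-1 : R).
rewrite expRN in h.
have hp := expR_gt0 (2^-1 : R).
have hf : (expR 2^-1)^-1 * expR 2^-1 = 1 :> R by rewrite mulVf // gt_eqF.
set e := expR 2^-1 in h hp hf *; set f := e^-1 in h hf *.
nra.
Qed.

Lemma expR2_le16 : expR 2 <= 16 :> R.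
Proof.
have -> : (2 : R) = 4%:R * 2^-1 by field.
rewrite expRM_natl.
have h := expR_half_le2; have hp := expR_gt0 (2^-1 : R).
set e := expR 2^-1 in h hp *.
have e2 : e ^+ 2 <= 4 by rewrite expr2; nra.
have -> : e ^+ 4 = e ^+ 2 * e ^+ 2 by rewrite -exprD.
have : 0 <= e ^+ 2 by apply: exprn_ge0; lra.
nra.
Qed.

Lemma expR1_le4 : expR 1 <= 4 :> R.
Proof.
have -> : (1 : R) = 2%:R * 2^-1 by field.
rewrite expRM_natl.
have h := expR_half_le2; have hp := expR_gt0 (2^-1 : R).
rewrite expr2; nra.
Qed.

Lemma powle (q r : R) (S : nat) : 0 <= q -> q <= r -> q ^+ S <= r ^+ S.
Proof. by move=> q0 qr; apply: lerXn2r; rewrite ?nnegrE //; apply: le_trans qr. Qed.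

Lemma numeric (b eta lnN D q : R) (s S : nat) :
  0 <= b -> 1 <= D -> b * D <= eta / 300 -> 0 < eta -> eta < 2^-1 -> 1 <= lnN ->
  s%:R <= 20 * D * lnN -> 10 * expR (eta * lnN) * lnN < S%:R + 1 ->
  0 <= q -> q <= 1 - (1 - 2 * b) ^+ s -> q ^+ S <= expR (- (10 * lnN)).
Proof.
move=> b0 D1 bD e0 e1 l1 hs hS q0 hq.
have bbD : b <= b * D by apply: ler_peMr.
have b1 : b <= 600^-1 by clear -bbD bD e1; lra.
set t := eta * lnN.
have t0 : 0 < t by rewrite /t mulr_gt0 //; clear -l1; lra.
have s0 : 0 <= s%:R :> R by [].
have hbs : 4 * b * s%:R <= 4 / 15 * t.
  have h1 : b * s%:R <= b * (20 * D * lnN) by apply: ler_wpM2l.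
  have h2 : b * D * lnN <= eta / 300 * lnN by apply: ler_wpM2r => //; clear -l1; lra.
  rewrite /t; clear -h1 h2; lra.
have et1 : 1 + t <= expR t := expR_ge1Dx t.
have hl : lnN <= expR t * lnN by apply: ler_peMl; clear -l1 t0 et1; lra.
have eS : 5 * lnN <= S%:R by clear -hS hl l1; lra.
have [tsmall|tbig] := lerP t (5^-1).
  have hb2 : 0 <= 2 * b <= 1 by apply/andP; split; clear -b0 b1; lra.
  have hB := bern _ s hb2.
  have q16 : q <= 16^-1 by clear -hB hq hbs tsmall; lra.
  have e2 := expR2_le16.
  have e2p := expR_gt0 (2 : R).
  have qe : q <= expR (-2).
    rewrite expRN; apply: le_trans q16 _; rewrite lef_pV2 ?posrE //; clear -e2; lra.
  apply: le_trans (powle _ _ S q0 qe) _.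
  rewrite -expRM_natr ler_expR; clear -eS; lra.
have e4 : expR (- (4 * b)) <= 1 - 2 * b.
  have h1 := expR_ge1Dx (4 * b).
  have h3 : expR (- (4 * b)) * expR (4 * b) = 1 by rewrite -expRD addNr expR0.
  have h4 := expR_gt0 (- (4 * b)).
  set u := expR (- (4 * b)) in h3 h4 *; set w := expR (4 * b) in h1 h3.
  have h5 : (1 + 4 * b) * (1 - 2 * b) <= w * (1 - 2 * b).
    by apply: ler_wpM2r => //; clear -b1; lra.
  have h6 : 1 <= (1 + 4 * b) * (1 - 2 * b) by clear -b0 b1; nra.
  have h7 : u <= u * (w * (1 - 2 * b)) by apply: ler_peMr; [lra | lra].
  by rewrite mulrA h3 mul1r in h7.
have e5 : expR (- (4 / 15 * t)) <= (1 - 2 * b) ^+ s.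
  apply: le_trans (powle _ _ s (expR_ge0 _) e4).
  rewrite -expRM_natr ler_expR; clear -hbs; lra.
set z := expR (- (4 / 15 * t)) in e5.
have hq2 : q <= expR (- z).
  apply: le_trans hq _; have := expR_ge1Dx (- z); clear -e5; lra.
apply: le_trans (powle _ _ S q0 hq2) _.
rewrite -expRM_natr ler_expR.
have z1 : z <= 1 by rewrite /z expR_le1; clear -t0; lra.
have z0 : 0 < z by apply: expR_gt0.
have zt : z * expR t = expR (11 / 15 * t) by rewrite /z -expRD; congr expR; field.
have e11 := expR_ge1Dx (11 / 15 * t).
have hz : z * (10 * expR t * lnN) < z * (S%:R + 1) by rewrite ltr_pM2l.
have hz2 : z * (10 * expR t * lnN) = 10 * (expR (11 / 15 * t) * lnN) by rewrite -zt; ring.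
rewrite hz2 in hz.
have hA : (1 + 11 / 15 * t) * lnN <= expR (11 / 15 * t) * lnN.
  by apply: ler_wpM2r => //; clear -l1; lra.
have hB : 5^-1 * lnN <= t * lnN by apply: ler_wpM2r => //; [clear -l1; lra | lra].
set E := expR (11 / 15 * t) in hz hA.
clear -hz hA hB l1 z1 z0.
lra.
Qed.
End Num.

Section Q.
Variables (R : realType) (n m : nat) (Om : finType) (F : 'I_n -> {set Om}).
Variables (vbl : 'I_m -> {set 'I_n}) (bad : 'I_m -> 'I_n -> Om).

Lemma qE (S : {set 'I_m}) :
  \sum_X unif R (prodset F) X * (~~ satC vbl bad S X)%:R =
  (#|Omg n Om F| - cnt n m Om F vbl bad S)%N%:R / (#|Omg n Om F|)%:R.
Proof.
have -> : \sum_X unif R (prodset F) X * (~~ satC vbl bad S X)%:R =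
   \sum_(X | (X \in Omg n Om F) && ~~ satC vbl bad S X) (#|Omg n Om F|%:R)^-1.
  rewrite [RHS]big_mkcond /=; apply: eq_bigr => X _; rewrite ffunE /Omg.
  by case: (X \in prodset F); case: (satC _ _ _ _); rewrite /= ?mulr1 ?mulr0 ?mul0r.
rewrite sumr_const mulr_natl.
have -> : (#|Omg n Om F| - cnt n m Om F vbl bad S)%N =
   #|[pred X | (X \in Omg n Om F) && ~~ satC vbl bad S X]|.
  rewrite /cnt -(cardsID [set X | satC vbl bad S X] (Omg n Om F)).
  rewrite (_ : Omg n Om F :&: _ = [set X in Omg n Om F | satC vbl bad S X]); last first.
    by apply/setP => X; rewrite !inE.
  by rewrite addKn; apply: eq_card => X; rewrite !inE andbC.
by apply: congr1; apply: eq_card => X; rewrite !inE.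
Qed.

Lemma q_le (S : {set 'I_m}) (c : R) : 0 <= c <= 1 ->
  c * (#|Omg n Om F|)%:R <= (cnt n m Om F vbl bad S)%:R ->
  0 <= \sum_X unif R (prodset F) X * (~~ satC vbl bad S X)%:R <= 1 - c.
Proof.
move=> /andP[c0 c1] hc; rewrite qE.
have hcnt : (cnt n m Om F vbl bad S <= #|Omg n Om F|)%N.
  by apply: subset_leq_card; apply/subsetP => X; rewrite inE => /andP[].
have [->|Hn] := eqVneq #|Omg n Om F| 0%N.
  by rewrite invr0 mulr0 lexx /=; lra.
have Hp : 0 < (#|Omg n Om F|)%:R :> R by rewrite ltr0n lt0n.
apply/andP; split; first by apply: divr_ge0.
rewrite natrB // ler_pdivrMr // mulrBl mul1r.
lra.
Qed.
End Q.


Lemma N8 (R : realType) (nn k e : R) : 1 <= nn -> 4 <= k -> 0 < e -> e < 2^-1 -> 8 <= nn * k / e.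
Proof.
move=> n1 k4 e0 e1; rewrite ler_pdivlMr //.
have k0 : 0 <= k by lra.
have := ler_wpM2r k0 n1; rewrite mul1r => h.
lra.
Qed.

Lemma bD_aux (R : realType) (b eta D : R) : 1 <= D -> b <= eta / (300 * D) -> b * D <= eta / 300.
Proof.
move=> D1 h.
have Dp : 0 <= D by lra.
have := ler_wpM2r Dp h.
by rewrite invfM mulrA -(mulrA _ _ D) mulVf ?mulr1 // gt_eqF //; lra.
Qed.

Lemma ln_ge1 (R : realType) (x : R) : 4 <= x -> 1 <= ln x.
Proof.
move=> h4; have h := expR1_le4 R.
rewrite -[X in X <= _](expRK 1) ler_ln ?posrE ?expR_gt0 //; lra.
Qed.

Lemma kappa4 (R : realType) (D k : R) : 1 <= D -> 4 * ln (3 * 10 ^+ 3 * D) <= k -> 4 <= k.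
Proof.
move=> D1 h; have : 1 <= ln (3 * 10 ^+ 3 * D).
  apply: ln_ge1; rewrite (_ : (10:R) ^+ 3 = 1000); first lra.
  by rewrite !exprS expr0 mulr1; lra.
lra.
Qed.

Lemma nbeta (R : realType) (nn k e : R) : 1 <= nn -> 4 <= k -> 0 < e -> e < 2^-1 ->
  nn * (e / (k * nn)) ^+ 10 <= (e / (k * nn)) ^+ 9.
Proof.
move=> n1 k4 e0 e1.
have r0 : 0 <= e / (k * nn) by apply: divr_ge0; [lra | apply: mulr_ge0; lra].
rewrite exprS mulrA.
have -> : nn * (e / (k * nn)) = e / k by field; apply/andP; split; rewrite gt_eqF //; lra.
rewrite -[X in _ <= X]mul1r; apply: ler_wpM2r; first exact: exprn_ge0.
rewrite ler_pdivrMr; lra.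
Qed.

Lemma hb_aux (R : realType) (b eta : R) (Dn : nat) : 0 <= b -> (1 : R) <= Dn%:R ->
  b * Dn%:R <= eta / 300 -> eta < 2^-1 ->
  [/\ 0 <= 2 * b, 2 * b <= 1 & b <= 2 * b * (1 - 2 * b) ^+ Dn].
Proof.
move=> b0 D1 bD e1.
have bbD : b <= b * Dn%:R by apply: ler_peMr.
have b1 : b <= 600^-1 by clear -bbD bD e1; lra.
have hb2 : 0 <= 2 * b <= 1 by apply/andP; split; clear -b0 b1; lra.
have hB := bern _ _ Dn hb2.
have h2 : 2^-1 <= (1 - 2 * b) ^+ Dn by clear -hB bD e1; lra.
split; try lra.
have b20 : 0 <= 2 * b by lra.
have := ler_wpM2l b20 h2; clear -b0; lra.
Qed.

Lemma dprob_dret (R : realType) (T : finType) (x : T) (E : pred T) :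
  dprob (dret R x) E = (E x)%:R.
Proof.
rewrite /dprob.
case Ex: (E x).
  rewrite (bigD1 x) //= big1 ?ffunE ?eqxx ?addr0 //.
  by move=> y /andP[_ /negbTE Hy]; rewrite ffunE Hy.
rewrite big1 // => y Ey; rewrite ffunE; case: (y =P x) => [Eyx|] //.
by rewrite Eyx Ex in Ey.
Qed.

Lemma dprob_bind_ret (R : realType) (A B : finType) (d : dist R A) (g : A -> B) (E : pred B) :
  dprob (dbind d (fun a => dret R (g a))) E = dprob d (fun a => E (g a)).
Proof.
rewrite dprob_bind; under eq_bigr => a _ do rewrite dprob_dret.
rewrite /dprob [RHS]big_mkcond /=; apply: eq_bigr => a _.
case: (E (g a)); by rewrite ?mulr1 ?mulr0.
Qed.

Section Main.
Variables (R : realType) (n m : nat) (Om Q : finType) (Dom : 'I_n -> {set Om}).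
Variables (pi : 'I_n -> Om -> Q) (vbl : 'I_m -> {set 'I_n}) (bad : 'I_m -> 'I_n -> Om).
Variables (eta kappa eps : R).
Hypothesis HDom : forall v, Dom v != set0.
Hypothesis Hbad : forall C u, u \in vbl C -> bad C u \in Dom u.
Hypotheses (e0 : 0 < eta) (e1 : eta < 2^-1) (HA1 : A1 Dom pi vbl bad eta).
Hypotheses (k4 : 4 <= kappa) (eps0 : 0 < eps) (eps1 : eps < 2^-1).
Hypotheses (D1 : (1 : R) <= (Delta vbl)%:R) (n1 : (1 : R) <= n%:R).

Let b := bmax R Dom pi vbl bad.
Let Dl : R := (Delta vbl)%:R.
Let N : R := n%:R * kappa / eps.
Let lnN := ln N.
Let beta := expR (- (10 * lnN)).

Lemma b0 : 0 <= b.
Proof. exact: bigmax_ge_id. Qed.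

Lemma bC_le C : bC R Dom pi vbl bad C <= b.
Proof. exact: le_bigmax. Qed.

Lemma bD : b * Dl <= eta / 300.
Proof. exact: bD_aux. Qed.

Lemma N_ge : 8 <= N.
Proof. exact: N8. Qed.

Lemma lnN1 : 1 <= lnN.
Proof. apply: ln_ge1; apply: le_trans N_ge; lra. Qed.

Lemma Npos : 0 < N.
Proof. apply: lt_le_trans N_ge; lra. Qed.

Lemma betaE : beta = (eps / (kappa * n%:R)) ^+ 10.
Proof.
rewrite /beta expRN expRM_natl /lnN lnK ?posrE ?Npos // -exprVn.
congr (_ ^+ _); rewrite /N invfM invrK mulrC.
by rewrite (mulrC kappa).
Qed.

Lemma SnatE : 10 * expR (eta * lnN) * lnN < (Snat n kappa eps eta)%:R + 1.
Proof.
have -> : 10 * expR (eta * lnN) * lnN = Spar n kappa eps eta.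
  rewrite /Spar /powR (_ : kappa * n%:R / eps == 0 = false); last first.
    by apply/negbTE; rewrite (mulrC kappa) -/N gt_eqF ?Npos.
  by rewrite (mulrC kappa) -/N.
rewrite /Snat natr1; exact: truncnS_gt.
Qed.

Lemma key (F : 'I_n -> {set Om}) (S : {set 'I_m}) :
  (forall C, C \in S -> wC n m Om F vbl R C <= b) ->
  (#|S|)%:R <= Lpar vbl kappa eps ->
  attempts (Snat n kappa eps eta) (unif R (prodset F)) (satC vbl bad S) None <= beta.
Proof.
move=> hw hL.
rewrite attempts_None.
have [hx0 hx1 hb] := hb_aux _ _ _ _ b0 D1 bD e1.
have hdeg C : (#|[set C' | ~~ [disjoint vbl C & vbl C']]| <= Delta vbl)%N.
  by rewrite /Delta; apply: (leq_bigmax C).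
have Hc := lll_cnt n m Om F vbl bad R (2 * b) b (Delta vbl) S hx0 hx1 hb hw hdeg #|S| S erefl (subxx S).
have hc : 0 <= (1 - 2 * b) ^+ #|S| <= 1.
  apply/andP; split; first by apply: exprn_ge0; rewrite subr_ge0.
  by apply: exprn_ile1; rewrite ?subr_ge0 // lerBlDr lerDl.
have /andP[q0 q1] := q_le R n m Om F vbl bad S ((1 - 2 * b) ^+ #|S|) hc Hc.
exact: (numeric R b eta lnN Dl _ #|S| (Snat n kappa eps eta) b0 D1 bD e0 e1 lnN1 hL SnatE q0 q1).
Qed.

Lemma beta0 : 0 <= beta.
Proof. exact: expR_ge0. Qed.

Lemma sample_fail Y v : dprob (Sample Dom pi vbl bad kappa eps eta Y v) (fun p => p.2) <= beta.
Proof.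
cbv beta zeta delta [Sample].
set V' := [set: 'I_n] :\ v.
set Hv := compH pi vbl bad V' Y v.
set CH := CofH pi vbl bad V' Y Hv.
case: ifP => hL.
  apply: (dprob_bind_bound (unif_sp _ _) beta0) => q.
  by rewrite dprob_dret /= beta0.
set F := fun u => if u == v then Dom u else if u \in Hv then fibre Dom pi u (Y u) else Dom u.
set att := attempts _ _ _.
have att0 : forall o, 0 <= att o by case: (attempts_sp (Snat n kappa eps eta) (satC vbl bad CH) (unif_sp R (prodset F))).
apply: le_trans (dprob_bind_le (h := fun o => if o is None then 1 else 0) att0 _) _.
  case=> [X|] /=; first by rewrite dprob_dret.
  apply: dprob_le1; apply: dbind_sp; [exact: unif_sp | move=> q; exact: dret_sp].
rewrite (bigD1 None) //= big1 ?addr0 ?mulr1; last by case=> // X _; rewrite mulr0.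
apply: key; last by rewrite leNgt hL.
move=> C; rewrite inE => /andP[HCY Hsub].
move: HCY; rewrite inE => /forall_inP HCY.
apply: le_trans (bC_le C); rewrite /wC /bC.
apply: ler_prod => u Hu; rewrite invr_ge0 ler0n /=.
have fp : (0 < #|fibre Dom pi u (Cpi pi bad C u)|)%N.
  apply/card_gt0P; exists (bad C u); rewrite inE Hbad //= /Cpi eqxx.
have fFu : (#|fibre Dom pi u (Cpi pi bad C u)| <= #|F u|)%N.
  rewrite /F; case: (eqVneq u v) => [->|Huv].
    by apply: subset_leq_card; apply/subsetP => x; rewrite inE => /andP[].
  have -> : u \in Hv by apply: (subsetP Hsub).
  have -> : Y u = Cpi pi bad C u.
    by apply/eqP; apply: HCY; rewrite !inE Huv Hu.
  by [].
rewrite lef_pV2 ?posrE ?ltr0n ?ler_nat //.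
exact: leq_trans fp fFu.
Qed.

Lemma Sample_sp Y v : subprob (Sample Dom pi vbl bad kappa eps eta Y v).
Proof.
cbv beta zeta delta [Sample]; case: ifP => _.
  apply: dbind_sp; [exact: unif_sp | move=> q; exact: dret_sp].
apply: dbind_sp; first by apply: attempts_sp; exact: unif_sp.
case=> [X|]; first exact: dret_sp.
apply: dbind_sp; [exact: unif_sp | move=> q; exact: dret_sp].
Qed.

Lemma step_sp Y : subprob (step Dom pi vbl bad kappa eps eta Y).
Proof.
apply: dbind_sp; first exact: unif_sp.
move=> v; apply: dbind_sp; [exact: Sample_sp | move=> p; exact: dret_sp].
Qed.

Lemma Ydist_sp t : subprob (Ydist Dom pi vbl bad kappa eps eta t).
Proof.
elim: t => [|t IH] /=; first exact: unif_sp.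
apply: dbind_sp => // Y; apply: dbind_sp; [exact: step_sp | move=> p; exact: dret_sp].
Qed.

Lemma step_fail Y : dprob (step Dom pi vbl bad kappa eps eta Y) (fun p => p.2) <= beta.
Proof.
apply: (dprob_bind_bound (unif_sp _ _) beta0) => v.
rewrite dprob_bind_ret /=; exact: sample_fail.
Qed.

Lemma failS_bound t : failS Dom pi vbl bad kappa eps eta t <= (eps / (kappa * n%:R)) ^+ 10.
Proof.
rewrite -betaE; apply: (dprob_bind_bound (Ydist_sp _) beta0); exact: step_fail.
Qed.

Lemma inv_loop_sp Y l acc : subprob (inv_loop Dom pi vbl bad kappa eps eta Y l acc).
Proof.
elim: l acc => [|H l IH] acc /=; first exact: dret_sp.
apply: dbind_sp; first by apply: attempts_sp; exact: unif_sp.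
case=> [X|]; [exact: IH | exact: dret_sp].
Qed.

Lemma inv_loop_fail Y l acc :
  (forall H, H \in l -> #|CofH pi vbl bad [set: 'I_n] Y H|%:R <= Lpar vbl kappa eps) ->
  dprob (inv_loop Dom pi vbl bad kappa eps eta Y l acc) (fun o => Some o == Some None)
    <= (size l)%:R * beta.
Proof.
elim: l acc => [|H l IH] acc hl /=.
  by rewrite dprob_dret /= mul0r.
set F := fun u => if u \in H then fibre Dom pi u (Y u) else Dom u.
set att := attempts _ _ _.
have [att0 att1] : subprob att by apply: attempts_sp; exact: unif_sp.
set c := (size l)%:R * beta.
have c0 : 0 <= c by apply: mulr_ge0 => //; exact: beta0.
apply: le_trans (dprob_bind_le (h := fun o => (o == None)%:R + c) att0 _) _.
  case=> [X|] /=.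
    by rewrite add0r; apply: IH => H' HH'; apply: hl; rewrite inE HH' orbT.
  by rewrite dprob_dret /= lerDl.
under eq_bigr => o _ do rewrite mulrDr.
rewrite big_split /= (bigD1 None) //= big1 ?addr0 ?mulr1; last first.
  by case=> // X _; rewrite mulr0.
rewrite -mulr_suml -natr1 mulrDl mul1r addrC.
apply: lerD; first exact: ler_piMl c0 att1.
  apply: key; last by apply: hl; rewrite inE eqxx.
  move=> C; rewrite inE => /andP[HCY Hsub].
  move: HCY; rewrite inE => /forall_inP HCY.
  apply: le_trans (bC_le C); rewrite /wC /bC.
  apply: ler_prod => u Hu; rewrite invr_ge0 ler0n /=.
  rewrite /F (subsetP Hsub u Hu).
  have -> : Y u = Cpi pi bad C u by apply/eqP; apply: HCY; rewrite !inE Hu.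
  by [].
Qed.

Lemma InvSample_fail Y :
  dprob (InvSample Dom pi vbl bad kappa eps eta Y) (fun o => o == Some None) <= n%:R * beta.
Proof.
have nb0 : 0 <= n%:R * beta by apply: mulr_ge0 => //; exact: beta0.
rewrite /InvSample; case: ifP => hex.
  by rewrite dprob_dret.
rewrite dprob_bind_ret.
apply: le_trans (inv_loop_fail _ _ _ _) _.
  move=> H; rewrite mem_enum => HH.
  move/negbT: hex; rewrite negb_exists_in => /forall_inP /(_ H HH).
  by rewrite leNgt.
apply: ler_wpM2r; first exact: beta0.
rewrite ler_nat -cardE.
apply: leq_trans (leq_imset_card _ _) _.
by rewrite cardsT card_ord.
Qed.

Lemma failI_bound C0 : failI Dom pi vbl bad kappa eps eta C0 <= (eps / (kappa * n%:R)) ^+ 9.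
Proof.
apply: le_trans (_ : n%:R * beta <= _).
  apply: (dprob_bind_bound (Ydist_sp _)); last exact: InvSample_fail.
  by apply: mulr_ge0 => //; exact: beta0.
by rewrite betaE; apply: nbeta.
Qed.

End Main.

Theorem corollary4p8 :
  forall (R : realType) (K : R),
  exists c0 C0 : R, 1 <= c0 /\ 1 <= C0 /\
  forall (n m : nat) (Om Q : finType)
         (Dom : 'I_n -> {set Om}) (pi : 'I_n -> Om -> Q)
         (vbl : 'I_m -> {set 'I_n}) (bad : 'I_m -> 'I_n -> Om)
         (eta kappa eps : R),
    (* the CSP: nonempty domains, violating assignments inside the domains *)
    (forall v, Dom v != set0) ->
    (forall C u, u \in vbl C -> bad C u \in Dom u) ->
    (* admissibility with parameter eta (A1)-(A3), kappa as in (A2) *)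
    0 < eta < 2^-1 ->
    A1 Dom pi vbl bad eta ->
    A2 Dom pi vbl bad K kappa ->
    A3 R Dom pi vbl bad ->
    0 < eps < 2^-1 ->
    c0 <= (Delta vbl)%:R -> c0 <= n%:R ->
    (forall t : nat, (1 <= t <= Tnat vbl kappa eps C0)%N ->
       failS Dom pi vbl bad kappa eps eta t <= (eps / (kappa * n%:R)) ^+ 10)
    /\
    failI Dom pi vbl bad kappa eps eta C0 <= (eps / (kappa * n%:R)) ^+ 9.
Proof.
move=> R K; exists 1, 1; split; first exact: lexx.
split; first exact: lexx.
move=> n m Om Q Dom pi vbl bad eta kappa eps HDom Hbad /andP[e0 e1] HA1 [hk _ _] _
  /andP[eps0 eps1] D1 n1.
have k4 := kappa4 _ _ _ D1 hk.
split.
  move=> t _; apply: failS_bound => //.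
apply: failI_bound => //.
Qed.
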